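(* Let $m,n\ge 1$ and let $A\in\mathbb{R}^{m\times n}$ with rows $a_1,\dots,a_m$ maximize $\beta(A)$ among all $m\times n$ real matrices whose rows all have Euclidean norm $1$. For $i=1,\dots,m$ let $$W_i=\{x\in\{-1,1\}^n : \|Ax\|_\infty = a_i^\top x\}.$$ Then for every $i$ with $\sum_{x\in W_i}x\neq 0$, $$a_i=\frac{\sum_{x\in W_i}x}{\left\|\sum_{x\in W_i}x\right\|_2}.$$
   Context: For $A\in\mathbb{R}^{m\times n}$, $\beta(A)=\frac{1}{2^n}\sum_{x\in\{-1,1\}^n}\|Ax\|_\infty$. The maximum exists by compactness. *)

(* Defs.v *)
From HB Require Import structures.
From mathcomp Require Import all_boot all_order all_algebra.
From mathcomp Require Import reals.
Set Implicit Arguments. Unset Strict Implicit. Unset Printing Implicit Defensive.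
Import Order.TTheory GRing.Theory Num.Theory.
Local Open Scope ring_scope.

(* Sign vectors x in {-1,1}^n are encoded by s : {ffun 'I_n -> bool}
   (bijectively), via the column vector below. *)
Definition sgnvec (R : realType) (n : nat) (s : {ffun 'I_n -> bool}) : 'cV[R]_n :=
  \col_j (if s j then 1 else -1).

Definition infnorm (R : realType) (m : nat) (v : 'cV[R]_m) : R :=
  \big[Num.max/0]_(i < m) `|v i 0|.

Definition norm2 (R : realType) (n : nat) (v : 'cV[R]_n) : R :=
  Num.sqrt (\sum_(j < n) v j 0 ^+ 2).

Definition beta (R : realType) (m n : nat) (A : 'M[R]_(m, n)) : R :=
  (2 ^+ n)^-1 * \sum_(s : {ffun 'I_n -> bool}) infnorm (A *m sgnvec R s).

Definition unit_rows (R : realType) (m n : nat) (A : 'M[R]_(m, n)) : Prop :=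
  forall i : 'I_m, norm2 (row i A)^T = 1.

Definition W (R : realType) (m n : nat) (A : 'M[R]_(m, n)) (i : 'I_m)
  : {set {ffun 'I_n -> bool}} :=
  [set s | infnorm (A *m sgnvec R s) == (row i A *m sgnvec R s) 0 0].

(* Main.v *)
Require Import Defs.
From HB Require Import structures.
From mathcomp Require Import all_boot all_order all_algebra.
From mathcomp Require Import reals.
From mathcomp Require Import lra ring.
Import Order.TTheory GRing.Theory Num.Theory.
Local Open Scope ring_scope.
Set Implicit Arguments. Unset Strict Implicit.

Lemma inf_ge0 (R : realType) m (v : 'cV[R]_m) : 0 <= infnorm v.
Proof. by rewrite /infnorm; apply: (big_ind (fun x => 0 <= x)) => // x y hx hy; rewrite le_max hx. Qed.

Lemma inf_ge (R : realType) m (v : 'cV[R]_m) k : `|v k 0| <= infnorm v.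
Proof.
rewrite /infnorm (bigD1 k) //= le_max lexx //.
Qed.

Lemma inf_attain (R : realType) m (v : 'cV[R]_m) (hm : (0 < m)%N) :
  exists k, infnorm v = `|v k 0|.
Proof.
have [k _ e] := @eq_bigmax _ R _ 0 (Ordinal hm) xpredT (fun k => `|v k 0|) isT
  (fun i _ => normr_ge0 _).
by exists k; rewrite -e.
Qed.

Lemma infN (R : realType) m (v : 'cV[R]_m) : infnorm (- v) = infnorm v.
Proof. by apply: eq_bigr => k _; rewrite mxE normrN. Qed.

Lemma pointwise (R : realType) m (hm : (0 < m)%N) (vA vB : 'cV[R]_m) i :
  (forall k, k != i -> vB k 0 = vA k 0) ->
  (if infnorm vA == vA i 0 then vB i 0 - vA i 0 else 0) +
  (if infnorm vA == - vA i 0 then vA i 0 - vB i 0 else 0)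
  <= infnorm vB - infnorm vA.
Proof.
move=> hk.
have hd := inf_ge vB i.
have hB0 := inf_ge0 vB.
case: eqP => h1; case: eqP => h2.
- have c0 : vA i 0 = 0 by move: h2; rewrite h1 => /eqP; rewrite -subr_eq0 opprK -mulr2n mulrn_eq0 /= => /eqP.
  rewrite h1 c0 !subr0 sub0r addrN; lra.
- rewrite h1 addr0; have := ler_norm (vB i 0); lra.
- rewrite h2 add0r.
  have := ler_norm (- vB i 0); rewrite normrN; lra.
- have [k hkv] := inf_attain vA hm.
  have ki : k != i.
    apply/eqP => ki; subst k; move: hkv; case: (lerP 0 (vA i 0)) => hc.
      by rewrite ger0_norm //.
    by rewrite ltr0_norm //.
  rewrite addr0 subr_ge0 hkv -hk //; exact: inf_ge.
Qed.

Definition negs n (x : {ffun 'I_n -> bool}) : {ffun 'I_n -> bool} := [ffun j => ~~ x j].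

Lemma negs_inj n : injective (@negs n).
Proof. move=> x y /ffunP h; apply/ffunP => j; have := h j; rewrite !ffunE; by case: (x j); case: (y j). Qed.

Lemma sgnvec_neg (R : realType) n (x : {ffun 'I_n -> bool}) : sgnvec R (negs x) = - sgnvec R x.
Proof. apply/matrixP => j k; rewrite !mxE ffunE; by case: (x j); rewrite ?opprK. Qed.

Theorem theorem1 (R : realType) (m n : nat) (hm : (0 < m)%N) (hn : (0 < n)%N)
  (A : 'M[R]_(m, n)) :
  unit_rows A ->
  (forall B : 'M[R]_(m, n), unit_rows B -> beta B <= beta A) ->
  forall i : 'I_m,
    let S := \sum_(s in W A i) sgnvec R s in
    S != 0 ->
    (row i A)^T = (norm2 S)^-1 *: S.
Proof.
move=> hA hmax i S hS.
set N := norm2 S.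
have hsq : 0 < \sum_j S j 0 ^+ 2.
  rewrite lt_def sumr_ge0 ?andbT; last by move=> j _; exact: sqr_ge0.
  apply/negP => /eqP h0; move/negP: hS; apply; apply/eqP/matrixP => j k.
  rewrite ord1 mxE; apply/eqP; rewrite -sqrf_eq0; apply/eqP.
  by apply: (psumr_eq0P _ h0) => // l _; exact: sqr_ge0.
have hN2 : N ^+ 2 = \sum_j S j 0 ^+ 2 by rewrite /N /norm2 sqr_sqrtr // ltW.
have hN : 0 < N by rewrite /N /norm2 sqrtr_gt0.
have ha : \sum_j A i j ^+ 2 = 1.
  have := hA i; rewrite /norm2 => h.
  have := @sqr_sqrtr R (\sum_(j < n) (row i A)^T j 0 ^+ 2) (sumr_ge0 _ (fun j _ => sqr_ge0 _)).
  rewrite h expr1n => ->; by apply: eq_bigr => j _; rewrite !mxE.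
have hu2 : \sum_j (N^-1 * S j 0) ^+ 2 = 1.
  under eq_bigr do rewrite exprMn.
  by rewrite -mulr_sumr -hN2 exprVn mulVf // expf_neq0 // gt_eqF.
set B : 'M[R]_(m, n) := \matrix_(k, j) if k == i then N^-1 * S j 0 else A k j.
have hB : unit_rows B.
  move=> k; case: (eqVneq k i) => [->|ki].
    rewrite /norm2 -[X in _ = X]sqrtr1; congr Num.sqrt; rewrite -hu2.
    by apply: eq_bigr => j _; rewrite !mxE eqxx.
  rewrite -(hA k); congr norm2; apply/matrixP => j l; by rewrite !mxE (negbTE ki).
have hle := hmax B hB.
have hsum : \sum_(x : {ffun 'I_n -> bool}) infnorm (B *m sgnvec R x)
    <= \sum_(x : {ffun 'I_n -> bool}) infnorm (A *m sgnvec R x).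
  by move: hle; rewrite /beta ler_pM2l // invr_gt0 exprn_gt0.
have hk : forall (y : 'cV[R]_n) k, k != i -> (B *m y) k 0 = (A *m y) k 0.
  move=> y k ki; rewrite !mxE; apply: eq_bigr => j _; by rewrite mxE (negbTE ki).
have nE : forall v : 'cV[R]_m, (- v) i 0 = - v i 0 by move=> v; rewrite mxE.
pose h1 (x : {ffun 'I_n -> bool}) := if infnorm (A *m sgnvec R x) == (A *m sgnvec R x) i 0
  then (B *m sgnvec R x) i 0 - (A *m sgnvec R x) i 0 else 0.
have hp : forall x, h1 x + h1 (negs x) <=
    infnorm (B *m sgnvec R x) - infnorm (A *m sgnvec R x).
  move=> x; have := @pointwise R m hm (A *m sgnvec R x) (B *m sgnvec R x) i (hk _).
  rewrite /h1 !sgnvec_neg !mulmxN infN !nE.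
  move=> H; apply: le_trans H; rewrite lerD2l; case: ifP => _ //; lra.
have er : \sum_x h1 (negs x) = \sum_x h1 x.
  by rewrite [RHS](reindex_inj (@negs_inj n)).
have hh : \sum_x h1 x <= 0.
  have : \sum_x (h1 x + h1 (negs x)) <= 0.
    apply: le_trans (ler_sum _ (fun x _ => hp x)) _.
    by rewrite sumrB subr_le0.
  rewrite big_split /= er => H; lra.
have hW : \sum_x h1 x = \sum_j (N^-1 * S j 0 - A i j) * S j 0.
  rewrite /h1 -big_mkcond /=.
  have -> : \sum_(x | infnorm (A *m sgnvec R x) == (A *m sgnvec R x) i 0)
       ((B *m sgnvec R x) i 0 - (A *m sgnvec R x) i 0)
     = \sum_(x in W A i) \sum_j (N^-1 * S j 0 - A i j) * sgnvec R x j 0.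
    apply: eq_big => x.
      rewrite inE; by rewrite -row_mul !mxE.
    move=> _; rewrite !mxE -sumrB; apply: eq_bigr => j _; by rewrite !mxE eqxx mulrBl.
  rewrite exchange_big; apply: eq_bigr => j _.
  rewrite /= -mulr_sumr; congr (_ * _); by rewrite /S summxE.
have hP : N <= \sum_j A i j * S j 0.
  move: hh; rewrite hW.
  under eq_bigr do rewrite mulrBl.
  rewrite sumrB subr_le0.
  under eq_bigr do rewrite -mulrA -expr2.
  by rewrite -mulr_sumr -hN2 expr2 mulrA mulVf ?mul1r // gt_eqF.
have h1P : 1 <= N^-1 * \sum_j A i j * S j 0 by rewrite ler_pdivlMl // mulr1.
have hz : \sum_j (A i j - N^-1 * S j 0) ^+ 2 = 0.
  apply/eqP; rewrite eq_le sumr_ge0 ?andbT; last by move=> j _; exact: sqr_ge0.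
  have -> : \sum_j (A i j - N^-1 * S j 0) ^+ 2 =
     \sum_j A i j ^+ 2 - 2 * (N^-1 * \sum_j A i j * S j 0) + \sum_j (N^-1 * S j 0) ^+ 2.
    rewrite mulr_sumr mulr_sumr -sumrB -big_split /=; apply: eq_bigr => j _; ring.
  rewrite ha hu2; lra.
apply/matrixP => j k; rewrite ord1 !mxE.
apply/eqP; rewrite -subr_eq0 -sqrf_eq0; apply/eqP.
by apply: (psumr_eq0P _ hz) => // l _; exact: sqr_ge0.
Qed.
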